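(* Let $H \in \mathcal{M}_n(\mathbb{C})$ be a Hermitian matrix whose largest eigenvalue (spectral radius) is simple. Then $H$ has exactly $k$ distinct eigenvalues, where $2 \le k \le n$, if and only if there are $k$ distinct real numbers $\lambda_1, \lambda_2, \ldots, \lambda_k$ such that (i) $H - \lambda_i I$ is a singular matrix for every $2 \le i \le k$; and (ii) $\prod_{i=2}^{k}(H - \lambda_i I) = b\,\mathbf{y}\mathbf{y}^\ast$ and $H\mathbf{y} = \lambda_1 \mathbf{y}$ for some $b \in \mathbb{C}\setminus\{0\}$ and some $\mathbf{y} \in \mathbb{C}^n \setminus \{\mathbf{0}\}$. Moreover, in this case $\lambda_1, \lambda_2, \ldots, \lambda_k$ are exactly the $k$ distinct eigenvalues of $H$.
   Context: $\mathcal{M}_n(\mathbb{C})$ is the set of $n\times n$ complex matrices, $I$ the identity matrix, $\mathbf{y}^\ast = \overline{\mathbf{y}}^T$. The spectral radius of a Hermitian matrix here means its largest eigenvalue; it is simple if its algebraic multiplicity is $1$. *)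

(* Defs.v *)
From HB Require Import structures.
From mathcomp Require Import all_boot all_order all_algebra.
Set Implicit Arguments. Unset Strict Implicit. Unset Printing Implicit Defensive.
Import Order.TTheory GRing.Theory Num.Theory.
Local Open Scope ring_scope.

(* Complex numbers are modelled by an arbitrary numClosedFieldType C
   (e.g. algC, or complex R for a real closed field R).               *)

Definition has_k_distinct_eigenvalues (C : numClosedFieldType) (n k : nat)
  (H : 'M[C]_n) : Prop :=
  exists s : seq C, [/\ uniq s, size s = k & forall a, eigenvalue H a <-> a \in s].

Definition simple_spectral_radius (C : numClosedFieldType) (n : nat)
  (H : 'M[C]_n) : Prop :=
  exists rho : C, [/\ eigenvalue H rho,
    (forall a, eigenvalue H a -> a <= rho)
    & mup rho (char_poly H) = 1%N].

Definition eig_conditions (C : numClosedFieldType) (n k : nat)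
  (H : 'M[C]_n) (lam : nat -> C) : Prop :=
  [/\ (forall i, (1 <= i <= k)%N -> lam i \is Num.real),
      (forall i j, (1 <= i <= k)%N -> (1 <= j <= k)%N -> lam i = lam j -> i = j),
      (forall i, (2 <= i <= k)%N -> (H - (lam i)%:M) \notin unitmx)
    & exists (b : C) (y : 'cV[C]_n),
        [/\ b != 0, y != 0,
            \prod_(2 <= i < k.+1) (H - (lam i)%:M) = b *: (y *m (map_mx Num.conj y)^T)
          & H *m y = lam 1%N *: y]].

(* Main.v *)
Require Import Defs.
From HB Require Import structures.
From mathcomp Require Import all_boot all_order all_algebra.
From mathcomp Require Import zify.
Set Implicit Arguments. Unset Strict Implicit. Unset Printing Implicit Defensive.
Import Order.TTheory GRing.Theory Num.Theory.
Local Open Scope ring_scope.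
Lemma eig_unit (F : fieldType) n (A : 'M[F]_n) a :
  eigenvalue A a = (A - a%:M \notin unitmx).
Proof. by rewrite /eigenvalue /eigenspace -row_free_unit -kermx_eq0. Qed.

Lemma col_nonunit (F : fieldType) n (A : 'M[F]_n) :
  A \notin unitmx -> exists2 u : 'cV_n, A *m u = 0 & u != 0.
Proof.
rewrite -unitmx_tr -row_free_unit -kermx_eq0 => /rowV0Pn [v].
rewrite sub_kermx => /eqP vA v0; exists v^T.
  by rewrite -[A]trmxK -trmx_mul vA trmx0.
by rewrite -trmx0 (inj_eq trmx_inj).
Qed.

Lemma prod_eigen (F : fieldType) n (A : 'M[F]_n) (r : seq nat) (c : nat -> F)
   (u : 'cV_n) a : A *m u = a *: u ->
  (\prod_(i <- r) (A - (c i)%:M)) *m u = (\prod_(i <- r) (a - c i)) *: u.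
Proof.
move=> Au; elim: r => [|i r IH]; first by rewrite !big_nil mul1mx scale1r.
rewrite !big_cons -mulmxE -mulmxA IH -scalemxAr mulmxBl Au mul_scalar_mx.
by rewrite -scalerBl scalerA mulrC.
Qed.

Lemma moreover (C : numClosedFieldType) (n : nat) (H : 'M[C]_n) (k : nat) lam :
  (1 <= k)%N -> eig_conditions k H lam ->
  forall a, eigenvalue H a <-> exists2 i, (1 <= i <= k)%N & a = lam i.
Proof.
move=> k1 [_ _ sing [b [y [b0 y0 Pe Hy]]]] a; split; last first.
  move=> [i /andP[i1 ik] ->]; rewrite eig_unit.
  case: (ltngtP 1 i) i1 => // [i2|<-] _; first by apply: sing; rewrite i2.
  apply/negP => U; move/negP: y0; apply; apply/eqP.
  by rewrite -(mulKmx U y) mulmxBl Hy mul_scalar_mx subrr mulmx0.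
rewrite eig_unit => /col_nonunit [u].
rewrite mulmxBl mul_scalar_mx => /eqP; rewrite subr_eq0 => /eqP Hu u0.
have [/hasP [i]|] := boolP (has (fun i => a == lam i) (index_iota 2 k.+1)).
  rewrite mem_index_iota => /andP[i2 ik] /eqP ->; exists i => //.
  by apply/andP; split; [exact: leq_trans _ i2 | rewrite -ltnS].
move=> hN.
have Pi0 : \prod_(i <- index_iota 2 k.+1) (a - lam i) != 0.
  rewrite prodf_seq_neq0; apply/allP => i ii; rewrite subr_eq0.
  by apply/negP => ai; move/hasP: hN; apply; exists i.
have := prod_eigen (index_iota 2 k.+1) lam Hu; rewrite Pe -scalemxAl -mulmxA.
rewrite [_ *m u]mx11_scalar mul_mx_scalar scalerA => E.
have [al uy] : exists al, u = al *: y.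
  move: E; set x := (_ 0 0) => E.
  exists ((\prod_(i <- index_iota 2 k.+1) (a - lam i))^-1 * (b * x)).
  by rewrite -scalerA E scalerA mulVf // scale1r.
exists 1%N; first by rewrite leqnn k1.
apply/eqP; rewrite -subr_eq0; apply/negP => /negP ne.
move: Hu; rewrite {1}uy -scalemxAr Hy scalerA mulrC -scalerA -uy => /eqP.
rewrite -subr_eq0 -scalerBl scaler_eq0 subr_eq0 (negbTE u0) orbF => /eqP e.
by move: ne; rewrite e subrr eqxx.
Qed.

Lemma char_poly_sim (F : fieldType) n (P Pi A : 'M[F]_n) :
  Pi *m P = 1%:M -> char_poly (Pi *m A *m P) = char_poly A.
Proof.
move=> PiP; rewrite /char_poly /char_poly_mx.
have mP : map_mx (@polyC F) Pi *m map_mx (@polyC F) P = 1%:M.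
  rewrite -map_mxM; transitivity (map_mx (@polyC F) (1%:M : 'M_n)); last exact: map_mx1.
  by congr map_mx; exact: PiP.
have eX : ('X%:M : 'M[{poly F}]_n) = map_mx polyC Pi *m 'X%:M *m map_mx polyC P.
  by rewrite mul_mx_scalar -scalemxAl mP scalemx1.
rewrite {1}eX !map_mxM -mulmxBl -mulmxBr !det_mulmx mulrAC -det_mulmx mP det1 mul1r //.
Qed.

Lemma char_poly_diag (F : fieldType) n (d : 'rV[F]_n) :
  char_poly (diag_mx d) = \prod_i ('X - (d 0 i)%:P).
Proof.
rewrite char_poly_trig ?diag_mx_is_trig //; apply: eq_bigr => i _.
by rewrite !mxE eqxx mulr1n.
Qed.

Lemma prod_diag (F : fieldType) n (P Pi : 'M[F]_n) (d : 'rV[F]_n) (r : seq nat) (c : nat -> F) :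
  Pi *m P = 1%:M -> 
  \prod_(i <- r) (Pi *m diag_mx d *m P - (c i)%:M) =
  Pi *m diag_mx (\row_j \prod_(i <- r) (d 0 j - c i)) *m P.
Proof.
move=> PiP; elim: r => [|i r IH].
  rewrite big_nil; have -> : diag_mx (\row_j \prod_(i <- [::]) (d 0 j - c i)) = 1%:M.
    by apply/matrixP => a b; rewrite !mxE big_nil.
  by rewrite mulmx1 PiP.
rewrite big_cons IH -mulmxE.
have -> : (c i)%:M = Pi *m (c i)%:M *m P :> 'M_n.
  by rewrite mul_mx_scalar -scalemxAl PiP scalemx1.
rewrite -mulmxBl -mulmxBr !mulmxA -[Pi *m _ *m P *m Pi]mulmxA (mulmx1C PiP) mulmx1.
congr (_ *m _); rewrite -mulmxA; congr (_ *m _).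
apply/matrixP => a b; rewrite mul_mx_diag !mxE big_cons.
by case: eqP => [->|]; rewrite ?mulr1n ?mulr0n ?subr0 ?mul0r.
Qed.

Lemma forward (C : numClosedFieldType) (n : nat) (H : 'M[C]_n) (k : nat) :
  H \is hermsymmx -> simple_spectral_radius H -> (2 <= k)%N ->
  has_k_distinct_eigenvalues k H -> exists lam : nat -> C, eig_conditions k H lam.
Proof.
move=> Hh [rho [erho rhomax mup1]] k2 [s [us sk seig]].
set P := spectralmx H; set d := spectral_diag H; set Pi := invmx P.
have /orthomx_spectralP HE := hermitian_normalmx Hh.
have PiP : Pi *m P = 1%:M := mulVmx (spectral_unit H).
have PPi := mulmx1C PiP.
have dreal : forall j, d 0 j \is Num.real.
  by move=> j; apply: (mxOverP (hermitian_spectral_diag_real Hh)).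
have charH : char_poly H = \prod_i ('X - (d 0 i)%:P).
  by rewrite HE char_poly_sim // char_poly_diag.
have eigE : forall a, eigenvalue H a <-> exists j, d 0 j = a.
  move=> a; rewrite eigenvalue_root_char charH /root horner_prod; split.
    by move=> /prodf_eq0 [j _]; rewrite hornerXsubC subr_eq0 => /eqP ->; exists j.
  move=> [j dj]; apply/prodf_eq0; exists j => //.
  by rewrite hornerXsubC dj subrr.
have [j0 dj0] := (eigE rho).1 erho.
have uniq0 : forall j, d 0 j = rho -> j = j0.
  move=> j dj; apply/eqP; apply: contraT => nj.
  have : (2 <= mup rho (char_poly H))%N; last by rewrite mup1.
  have nz : \prod_i ('X - (d 0 i)%:P) != 0.
    by apply/prodf_neq0 => i _; rewrite polyXsubC_eq0.
  rewrite charH mup_geq // (bigD1 j) //= (bigD1 j0) /=; last by rewrite eq_sym.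
  by rewrite mulrA dj dj0 expr2 dvdp_mulr.
have rho_s : rho \in s by apply/seig.
set s' := rem rho s.
have s'k : size s' = k.-1 by rewrite size_rem // sk.
have us' : uniq s' by apply: rem_uniq.
have rs' : rho \notin s' by rewrite mem_rem_uniqF.
have ins' : forall a, a \in s' -> a != rho /\ eigenvalue H a.
  by move=> a; rewrite mem_rem_uniq // inE => /andP[? /seig].
have ins'2 : forall a, a != rho -> eigenvalue H a -> a \in s'.
  by move=> a ar /seig aa; rewrite mem_rem_uniq // inE ar.
pose lam i := if i == 1%N then rho else nth 0 s' (i - 2).
have lam_s' : forall i, (2 <= i <= k)%N -> lam i \in s'.
  move=> i /andP[i2 ik]; rewrite /lam ifN; last by apply/eqP; lia.
  by apply: mem_nth; rewrite s'k; lia.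
have lam_real : forall i, (1 <= i <= k)%N -> lam i \is Num.real.
  move=> i /andP[i1 ik]; have [i2|->] : (2 <= i)%N \/ i = 1%N by lia.
    have /ins' [_ /eigE [j <-]] : lam i \in s' by apply: lam_s'; rewrite i2 ik.
    exact: dreal.
  by rewrite /lam eqxx -dj0 dreal.
have lam1 : lam 1%N = rho by [].
have lam2 : forall i, (2 <= i)%N -> lam i = nth 0 s' (i - 2).
  by move=> i i2; rewrite /lam ifN //; apply/eqP; lia.
exists lam; split => //.
- move=> i j /andP[i1 ik] /andP[j1 jk].
  case: (ltnP 1 i) => i2; case: (ltnP 1 j) => j2.
  + rewrite !lam2 // => /eqP; rewrite nth_uniq ?s'k //; try lia.
  + have -> : j = 1%N by lia.
    move=> e; have := lam_s' i; rewrite i2 ik e => /(_ isT).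
    by rewrite (negbTE rs').
  + have -> : i = 1%N by lia.
    move=> e; have := lam_s' j; rewrite j2 jk -e => /(_ isT).
    by rewrite (negbTE rs').
  + lia.
- move=> i ik; have /ins' [_] := lam_s' i ik.
  by rewrite eig_unit.
pose y : 'cV_n := Pi *m delta_mx j0 0.
pose b := \prod_(i <- index_iota 2 k.+1) (rho - lam i).
exists b, y; split.
- rewrite prodf_seq_neq0; apply/allP => i; rewrite mem_index_iota => ii.
  have /ins' [] : lam i \in s' by apply: lam_s'; lia.
  by rewrite subr_eq0 eq_sym.
- apply/negP => /eqP y0.
  have : P *m y = delta_mx j0 0 by rewrite /y mulmxA PPi mul1mx.
  rewrite y0 mulmx0 => /matrixP /(_ j0 0); rewrite !mxE !eqxx /= => /eqP.
  by rewrite eq_sym oner_eq0.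
- rewrite HE -/P -/d -/Pi prod_diag //.
  have -> : diag_mx (\row_j \prod_(i <- index_iota 2 k.+1) (d 0 j - lam i))
          = b *: delta_mx j0 j0.
    apply/matrixP => a c; rewrite !mxE.
    case: (eqVneq a c) => [<-|ac]; last first.
      rewrite mulr0n; case: (eqVneq a j0) => [ae|ane]; last by rewrite andFb mulr0.
      by rewrite -ae eq_sym (negbTE ac) andbF mulr0.
    rewrite mulr1n andbb; case: (eqVneq a j0) => [->|aj0].
      by rewrite dj0 mulr1.
    rewrite mulr0; apply/eqP; rewrite prodf_seq_eq0.
    have da : d 0 a != rho by apply/eqP => /uniq0; apply/eqP.
    have das : d 0 a \in s' by apply: ins'2 => //; apply/eigE; exists a.
    apply/hasP; exists (index (d 0 a) s').+2.
      have : (index (d 0%R a) s' < k.-1)%N by rewrite -s'k index_mem.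
      by rewrite mem_index_iota; lia.
    by rewrite lam2 // subn2 /= nth_index // subrr eqxx.
  have yT : (map_mx Num.conj y)^T = delta_mx 0 j0 *m P.
    rewrite /y /Pi invmx_unitary ?spectral_unitarymx // map_mxM map_delta_mx.
    rewrite -map_mx_comp map_mx_id; last by move=> x /=; rewrite conjCK.
    by rewrite trmx_mul trmx_delta trmxK.
  have dd : delta_mx j0 j0 = delta_mx j0 (0 : 'I_1) *m delta_mx 0 j0 :> 'M[C]_n.
    by rewrite mul_delta_mx.
  rewrite yT /y dd -scalemxAr -scalemxAl.
  by rewrite !mulmxA.
- have DE : diag_mx d *m delta_mx j0 0 = rho *: delta_mx j0 (0 : 'I_1).
    apply/matrixP=> a c; rewrite mul_diag_mx !mxE.
    by case: eqP => [->|]; rewrite ?dj0 ?mulr1 ?mulr0.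
  rewrite lam1 HE -/P -/d -/Pi /y !mulmxA -[Pi *m _ *m P *m Pi]mulmxA PPi mulmx1.
  by rewrite -mulmxA DE scalemxAr.
Qed.
Theorem theorem2p6 (C : numClosedFieldType) (n : nat) (H : 'M[C]_n) (k : nat) :
  H \is hermsymmx ->
  simple_spectral_radius H ->
  (2 <= k <= n)%N ->
  (has_k_distinct_eigenvalues k H <-> exists lam : nat -> C, eig_conditions k H lam)
  /\ (forall lam : nat -> C, eig_conditions k H lam ->
        forall a, eigenvalue H a <-> exists2 i, (1 <= i <= k)%N & a = lam i).
Proof.
move=> Hh ssr /andP[k2 kn].
have mor := fun lam c => @moreover C n H k lam (ltnW k2) c.
split=> //; split; first exact: forward.
move=> [lam c]; exists [seq lam i | i <- iota 1 k]; split.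
- rewrite map_inj_in_uniq ?iota_uniq // => i j; rewrite !mem_iota => ii jj.
  by case: c => _ inj _ _; apply: inj; rewrite ?ii ?jj; lia.
- by rewrite size_map size_iota.
- move=> a; rewrite (mor _ c); split.
    by move=> [i ii ->]; apply/mapP; exists i => //; rewrite mem_iota; lia.
  by move=> /mapP [i]; rewrite mem_iota => ii ->; exists i => //; lia.
Qed.
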